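(* Let $l:\mathbb{R}^p\to\mathbb{R}$ be convex and differentiable, let $\lambda_1\ge\dots\ge\lambda_p\ge0$ be arbitrary, and let $\hat b$ be a minimizer of $l(b)+\sum_{i=1}^p\lambda_i|b|_{(i)}$. Let $U(b)=-\nabla l(b)$. If $|\hat b_j|>|\hat b_k|$, then $|U_j(\hat b)|\ge|U_k(\hat b)|$.
   Context: $|b|_{(1)}\ge\dots\ge|b|_{(p)}$ denote the ordered absolute values of the entries of $b\in\mathbb{R}^p$. *)

(* Defs.v *)
From HB Require Import structures.
From mathcomp Require Import all_boot all_order all_algebra.
From mathcomp Require Import all_classical all_reals all_analysis.
Set Implicit Arguments. Unset Strict Implicit. Unset Printing Implicit Defensive.
Import Order.TTheory GRing.Theory Num.Theory.
Import numFieldNormedType.Exports.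
Local Open Scope ring_scope.

(* Vectors of R^p are row vectors 'rV[R]_p; b 0 i is the i-th coordinate. *)

Definition convex_fun (R : realType) (p : nat) (l : 'rV[R]_p -> R) : Prop :=
  forall (x y : 'rV[R]_p) (t : R), 0 <= t -> t <= 1 ->
    l (t *: x + (1 - t) *: y) <= t * l x + (1 - t) * l y.

Definition grad (R : realType) (p : nat) (l : 'rV[R]_p -> R) (b : 'rV[R]_p)
  : 'rV[R]_p := \row_(j < p) ('D_(delta_mx 0 j) l b).

Definition sorted_abs (R : realType) (p : nat) (b : 'rV[R]_p) : seq R :=
  sort (fun x y : R => y <= x) [seq `|b 0 i| | i <- enum 'I_p].

(* |b|_(i+1) (0-indexed i) *)
Definition ord_abs (R : realType) (p : nat) (b : 'rV[R]_p) (i : 'I_p) : R :=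
  nth 0 (sorted_abs b) i.

Definition slope_obj (R : realType) (p : nat) (l : 'rV[R]_p -> R)
  (lam : 'I_p -> R) (b : 'rV[R]_p) : R :=
  l b + \sum_(i < p) lam i * ord_abs b i.

(* Main.v *)
Require Import Defs.
From HB Require Import structures.
From mathcomp Require Import all_boot all_order all_algebra.
From mathcomp Require Import all_classical all_reals all_analysis.
From mathcomp Require Import perm ring lra.
Import Order.TTheory GRing.Theory Num.Theory.
Import numFieldNormedType.Exports.
Local Open Scope ring_scope.

Section Lists.
Variable R : realType.
Definition geR := fun x y : R => y <= x.

Definition WL (w : nat -> R) (s : seq R) := \sum_(i < size s) w i * s`_i.

Lemma WL_cons w x s : WL w (x :: s) = w 0%N * x + WL (fun n => w n.+1) s.
Proof. by rewrite /WL /= big_ord_recl. Qed.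

Fixpoint ins (x : R) (t : seq R) : seq R :=
  if t is y :: t' then (if y <= x then x :: y :: t' else y :: ins x t') else [:: x].

Definition isort (s : seq R) := foldr ins [::] s.

Lemma size_ins x t : size (ins x t) = (size t).+1.
Proof. by elim: t => //= y t IH; case: ifP => //= _; rewrite IH. Qed.

Lemma perm_ins x t : perm_eq (ins x t) (x :: t).
Proof.
elim: t => //= y t IH; case: ifP => _ //.
apply: (@perm_trans _ (y :: x :: t)); first by rewrite perm_cons.
by rewrite (perm_catCA [:: y] [:: x] t).
Qed.

Lemma perm_isort s : perm_eq (isort s) s.
Proof.
elim: s => //= x s IH; apply: (perm_trans (perm_ins _ _)); by rewrite perm_cons.
Qed.

Lemma path_ins x z t : x <= z -> path geR z t -> path geR z (ins x t).
Proof.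
elim: t z => [|y t IH] z xz /=; first by rewrite /geR xz.
case/andP=> yz pt; case: ifP => yx /=.
  by rewrite /geR xz yx.
rewrite yz /=; apply: IH => //; apply: ltW; rewrite ltNge; exact: negbT.
Qed.

Lemma sorted_ins x t : sorted geR t -> sorted geR (ins x t).
Proof.
case: t => //= y t pt; case: ifP => yx /=; first by rewrite {1}/geR yx.
apply: path_ins => //; apply: ltW; rewrite ltNge; exact: negbT.
Qed.

Lemma sorted_isort s : sorted geR (isort s).
Proof. by elim: s => //= x s IH; exact: sorted_ins. Qed.

Lemma sort_isort s : sort geR s = isort s.
Proof.
apply: (sorted_eq (leT := geR)).
- move=> a b c h1 h2; rewrite /geR in h1 h2 *; exact: le_trans h2 h1.
- move=> a b /andP[h1 h2]; apply/le_anti; rewrite /geR in h1 h2; by rewrite h1 h2.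
- apply: sort_sorted => a b; exact: le_total.
- exact: sorted_isort.
- by rewrite perm_sym (perm_trans (perm_isort s)) // perm_sym perm_sort.
Qed.

Lemma ins_ge t : forall w x, sorted geR t ->
  (forall m n, (m <= n <= size t)%N -> w n <= w m) ->
  WL w (x :: t) <= WL w (ins x t).
Proof.
elim: t => [|y t IH] w x st hw //=.
case: ifP => yx //.
rewrite !WL_cons addrA.
have hyx : x < y by rewrite ltNge yx.
have w01 : w 1%N <= w 0%N by apply: hw.
have ->: w 0%N * x + w 1%N * y = w 0%N * y + w 1%N * x - (w 0%N - w 1%N) * (y - x).
  by ring.
set z := WL _ t.
have : w 1%N * x + z <= WL (fun n => w n.+1) (ins x t).
  rewrite -(WL_cons (fun n => w n.+1)).
  apply: IH; first by move: st => /=; exact: path_sorted.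
  by move=> m n /andP[h1 h2]; apply: hw; rewrite ltnS h1 ltnS h2.
have : 0 <= (w 0%N - w 1%N) * (y - x).
  by apply: mulr_ge0; rewrite subr_ge0 // ltW.
lra.
Qed.

Lemma rearr s : forall w, (forall m n, (m <= n)%N -> (n < size s)%N -> w n <= w m) ->
  WL w s <= WL w (sort geR s).
Proof.
rewrite sort_isort.
elim: s => [|x s IH] w hw //=.
apply: (@le_trans _ _ (WL w (x :: isort s))).
  rewrite !WL_cons lerD2l; apply: IH => m n h1 h2; apply: hw => //.
apply: ins_ge; first exact: sorted_isort.
move=> m n /andP[h1 h2]; apply: hw => //.
by rewrite (perm_size (perm_isort s)) in h2.
Qed.

End Lists.
Arguments WL {R}.
Arguments geR {R}.
Arguments rearr {R}.

Section Vec.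
Variables (R : realType) (p : nat) (lam : 'I_p -> R) (i0 : 'I_p).
Hypothesis lam_mono : forall i i' : 'I_p, (i <= i')%N -> lam i' <= lam i.

Definition wl (n : nat) : R := lam (insubd i0 n).

Lemma wl_mono (s : seq R) : size s = p ->
  forall m n, (m <= n)%N -> (n < size s)%N -> wl n <= wl m.
Proof.
move=> hs m n mn; rewrite hs => np; rewrite /wl; apply: lam_mono.
by rewrite !val_insubd np (leq_ltn_trans mn np).
Qed.

Lemma WL_sum (s : seq R) : size s = p -> WL wl s = \sum_(i < p) lam i * s`_i.
Proof.
move=> hs; rewrite /WL.
rewrite -(big_mkord xpredT (fun i => wl i * s`_i)) hs big_mkord.
by apply: eq_bigr => i _; rewrite /wl valKd.
Qed.

Definition Jv (b : 'rV[R]_p) := \sum_(i < p) lam i * ord_abs b i.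
Definition Vs (q : {perm 'I_p}) (x : 'I_p -> R) := \sum_m lam (q m) * x m.

Lemma perm_map_enum (g : {perm 'I_p}) : perm_eq (map g (enum 'I_p)) (enum 'I_p).
Proof.
apply: uniq_perm.
- by rewrite map_inj_uniq ?enum_uniq //; exact: perm_inj.
- exact: enum_uniq.
move=> m; rewrite mem_enum; apply/mapP; exists (g^-1 m)%g; first by rewrite mem_enum.
by rewrite permKV.
Qed.

Lemma size_sorted_abs (b : 'rV[R]_p) : size (sorted_abs b) = p.
Proof. by rewrite /sorted_abs size_sort size_map size_enum_ord. Qed.

Lemma J_ge (b : 'rV[R]_p) q : Vs q (fun m => `|b 0 m|) <= Jv b.
Proof.
set x := fun m => `|b 0 m|.
rewrite /Vs (reindex_inj (@perm_inj _ (q^-1)%g)) /=.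
set f := fun i => x ((q^-1)%g i).
have -> : \sum_i lam (q ((q^-1)%g i)) * x ((q^-1)%g i) = \sum_(i < p) lam i * (map f (enum 'I_p))`_i.
  apply: eq_bigr => i _; rewrite permKV (nth_map i0) ?size_enum_ord //.
  by rewrite nth_ord_enum.
have hs : size (map f (enum 'I_p)) = p by rewrite size_map size_enum_ord.
rewrite -WL_sum //.
apply: le_trans; first by apply: rearr; exact: wl_mono.
have hp : perm_eq (map f (enum 'I_p)) (map x (enum 'I_p)).
  rewrite (_ : map f (enum 'I_p) = map x (map (q^-1)%g (enum 'I_p))).
    exact: perm_map (perm_map_enum _).
  by elim: (enum _) => //= a e ->.
have htot : total (@geR R) by move=> u v; exact: le_total.
have htr : transitive (@geR R) by move=> a c d h1 h2; exact: le_trans h2 h1.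
have hanti : antisymmetric (@geR R).
  move=> a c /andP[h1 h2]; apply/le_anti; rewrite /geR in h1 h2; by rewrite h1 h2.
rewrite (perm_sortP htot htr hanti _ _ hp).
by rewrite WL_sum ?size_sorted_abs.
Qed.

Lemma J_eq (b : 'rV[R]_p) : exists q, Jv b = Vs q (fun m => `|b 0 m|).
Proof.
set x := fun m => `|b 0 m|.
have : perm_eq (sorted_abs b) [tuple x i | i < p].
  by rewrite /sorted_abs perm_sort /=.
case/tuple_permP => s hs.
exists (s^-1)%g.
rewrite /Jv /Vs; symmetry; rewrite (reindex_inj (@perm_inj _ s)) /=.
apply: eq_bigr => i _; rewrite permK /ord_abs hs -tnth_nth !tnth_mktuple.
by [].
Qed.

Lemma sum2 (F : 'I_p -> R) (j k : 'I_p) : j != k ->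
  \sum_m F m = F j + F k + \sum_(m | (m != j) && (m != k)) F m.
Proof.
move=> jk; rewrite (bigD1 j) //= (bigD1 k) /=; last by rewrite eq_sym.
rewrite addrA; congr (_ + _); apply: eq_bigl => m; by [].
Qed.

Hypothesis lam0 : forall i, 0 <= lam i.

Lemma J_le_pw (b b' : 'rV[R]_p) :
  (forall m, `|b' 0 m| <= `|b 0 m|) -> Jv b' <= Jv b.
Proof.
move=> h; case: (J_eq b') => q ->; apply: le_trans (J_ge b q).
by apply: ler_sum => m _; apply: ler_wpM2l.
Qed.

Lemma J_le_tr (b b' : 'rV[R]_p) (j k : 'I_p) (t : R) : j != k -> 0 <= t ->
  `|b' 0 j| = `|b 0 j| - t -> `|b' 0 k| = `|b 0 k| + t ->
  `|b 0 k| <= `|b 0 j| - t ->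
  (forall m, m != j -> m != k -> `|b' 0 m| = `|b 0 m|) -> Jv b' <= Jv b.
Proof.
move=> jk t0 hj hk hjk hm; case: (J_eq b') => q ->.
have hrest : forall r : {perm 'I_p}, (forall m, m != j -> m != k -> r m = q m) ->
  \sum_(m | (m != j) && (m != k)) lam (q m) * `|b' 0 m| =
  \sum_(m | (m != j) && (m != k)) lam (r m) * `|b 0 m|.
  move=> r hr; apply: eq_bigr => m /andP[m1 m2]; by rewrite hm // hr.
case: (leqP (q j) (q k)) => h.
  apply: le_trans (J_ge b q); rewrite /Vs (sum2 _ _ _ jk) (sum2 (fun m => lam (q m) * `|b 0 m|) _ _ jk).
  rewrite (hrest q) // lerD2r hj hk.
  have := lam_mono _ _ h; nra.
apply: le_trans (J_ge b (tperm j k * q)%g).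
rewrite /Vs (sum2 _ _ _ jk) (sum2 (fun m => lam ((tperm j k * q)%g m) * `|b 0 m|) _ _ jk).
rewrite (hrest (tperm j k * q)%g); last first.
  by move=> m m1 m2; rewrite permM tpermD // eq_sym.
rewrite lerD2r hj hk !permM tpermL tpermR.
have := lam_mono _ _ (ltnW h).
move=> hca.
have : 0 <= (lam (q k) - lam (q j)) * (`|b 0 j| - t - `|b 0 k|) by apply: mulr_ge0; lra.
nra.
Qed.

End Vec.

Lemma dir_ge0 (R : realType) (p : nat) (l : 'rV[R]_p -> R) (b v : 'rV[R]_p) (t0 : R) :
  differentiable l b -> 0 < t0 ->
  (forall t, 0 < t -> t < t0 -> l b <= l (b + t *: v)) ->
  0 <= 'D_v l b.
Proof.
move=> dl t0pos H.
have dv := diff_derivable (v := v) dl.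
rewrite /derive cvg_at_rightE //.
apply: limr_ge.
  apply/cvg_ex; eexists; apply: cvg_dnbhs_at_right; exact: dv.
near=> h.
have h0 : 0 < h by near: h; exact: nbhs_right_gt.
have ht : h < t0 by near: h; exact: nbhs_right_lt.
rewrite /= /shift.
apply: mulr_ge0; first by rewrite invr_ge0 ltW.
by rewrite subr_ge0 addrC; apply: H.
Unshelve. all: by end_near.
Qed.

Definition sgn (R : realType) (a : R) : R := if 0 <= a then 1 else -1.
Arguments sgn {R}.
Arguments dir_ge0 {R p l b v t0}.
Arguments Jv {R p}.
Arguments J_le_pw {R p lam} i0 lam_mono lam0 {b b'}.
Arguments J_le_tr {R p lam} i0 lam_mono {b b' j k t}.

Lemma abs_shrink (R : realType) (a t : R) : 0 <= t -> t <= `|a| -> `|a - t * sgn a| = `|a| - t.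
Proof.
rewrite /sgn; case: ifP => ha t0 ta.
  rewrite ger0_norm // in ta *; rewrite ger0_norm; lra.
have ha' : a < 0 by rewrite ltNge ha.
rewrite ltr0_norm // in ta *; rewrite ler0_norm; lra.
Qed.

Lemma abs_grow (R : realType) (a t : R) : 0 <= t -> `|a + t * sgn a| = `|a| + t.
Proof.
rewrite /sgn; case: ifP => ha t0.
  rewrite !ger0_norm //; lra.
have ha' : a < 0 by rewrite ltNge ha.
rewrite !ltr0_norm //; lra.
Qed.

Lemma sgn_neg (R : realType) (a y : R) : sgn a * y <= 0 -> `|y| = - (sgn a * y).
Proof.
rewrite /sgn; case: ifP => _ h.
  rewrite ler0_norm; lra.
rewrite ger0_norm; lra.
Qed.

Lemma vec_entry (R : realType) (p : nat) (b : 'rV[R]_p) t c1 c2 (j k m : 'I_p) :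
  (b + t *: (c1 *: delta_mx 0 j + c2 *: delta_mx 0 k)) 0 m =
  b 0 m + t * ((if m == j then c1 else 0) + (if m == k then c2 else 0)).
Proof.
rewrite !mxE /=.
by case: (m == j); case: (m == k); rewrite /= ?mulr1 ?mulr0.
Qed.

Arguments abs_shrink {R a t}.
Arguments abs_grow {R a t}.
Arguments sgn_neg {R a y}.

Theorem proposition3 (R : realType) (p : nat) (l : 'rV[R]_p -> R)
  (lam : 'I_p -> R) (bhat : 'rV[R]_p) (j k : 'I_p) :
  convex_fun l ->
  (forall b : 'rV[R]_p, differentiable l b) ->
  (forall i i' : 'I_p, (i <= i')%N -> lam i' <= lam i) ->
  (forall i : 'I_p, 0 <= lam i) ->
  (forall b : 'rV[R]_p, slope_obj l lam bhat <= slope_obj l lam b) ->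
  `|bhat 0 j| > `|bhat 0 k| ->
  `|(- grad l bhat) 0 j| >= `|(- grad l bhat) 0 k|.
Proof.
move=> _ dl mono lam0 opt hjk.
set g := fun m => 'D_(delta_mx 0 m) l bhat.
have gE m : (- grad l bhat) 0 m = - g m by rewrite !mxE.
rewrite !gE !normrN.
have jk : j != k by apply/eqP => e; rewrite e ltxx in hjk.
have Dlin c1 c2 (m1 m2 : 'I_p) :
  'D_(c1 *: delta_mx 0 m1 + c2 *: delta_mx 0 m2) l bhat = c1 * g m1 + c2 * g m2.
  by rewrite /g !deriveE // linearD !linearZ.
have key : forall v, (exists2 t0, 0 < t0 & forall t, 0 < t -> t < t0 ->
    Jv lam (bhat + t *: v) <= Jv lam bhat) -> 0 <= 'D_v l bhat.
  move=> v [t0 t0p ht]; apply: (dir_ge0 (dl bhat) t0p) => t t1 t2.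
  have := opt (bhat + t *: v); rewrite /slope_obj -!/(Jv lam _).
  have := ht t t1 t2; lra.
have P1 : forall m, 0 < `|bhat 0 m| -> sgn (bhat 0 m) * g m <= 0.
  move=> m hm.
  have : 0 <= 'D_(- sgn (bhat 0 m) *: delta_mx 0 m + 0 *: delta_mx 0 m) l bhat; last first.
    rewrite Dlin; nra.
  apply: key; exists `|bhat 0 m| => // t t1 t2.
  apply: (J_le_pw j mono lam0) => m'.
  rewrite vec_entry; case: (eqVneq m' m) => [->|ne].
    rewrite addr0 mulrN (abs_shrink (ltW t1) (ltW t2)); lra.
  by rewrite addr0 mulr0 addr0.
have bj0 : 0 < `|bhat 0 j| by apply: le_lt_trans hjk.
set sj := sgn (bhat 0 j).
set sig := if bhat 0 k == 0 then (if 0 <= g k then -1 else 1) else sgn (bhat 0 k).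
have hD : 0 <= 'D_(- sj *: delta_mx 0 j + sig *: delta_mx 0 k) l bhat.
  apply: key; exists ((`|bhat 0 j| - `|bhat 0 k|) / 2); first by lra.
  move=> t t1 t2.
  apply: (J_le_tr j mono jk (ltW t1)).
  - rewrite vec_entry eqxx (negbTE jk) addr0 mulrN (abs_shrink (ltW t1)) //.
    have := normr_ge0 (bhat 0 k); lra.
  - rewrite vec_entry eqxx eq_sym (negbTE jk) add0r /sig.
    case: eqP => [->|nz].
      rewrite add0r normr0 add0r normrM (gtr0_norm t1).
      by case: ifP => _; rewrite ?normrN normr1 mulr1.
    exact: abs_grow (ltW t1).
  - lra.
  - move=> m m1 m2; rewrite vec_entry (negbTE m1) (negbTE m2).
    by rewrite addr0 mulr0 addr0.
move: hD; rewrite Dlin => hD.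
have gj : `|g j| = - (sj * g j) by apply: sgn_neg; apply: P1.
have gk : `|g k| <= - (sig * g k).
  rewrite /sig; case: eqP => [_|nz].
    case: ifP => h.
      by rewrite ger0_norm // mulN1r opprK.
    rewrite ltr0_norm ?mul1r //; by rewrite ltNge h.
  rewrite (sgn_neg (P1 _ _)) //; by rewrite normr_gt0; apply/eqP.
lra.
Qed.
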